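(* If $T\in\mathscr T$ satisfies $T(\mathbb C[\mathfrak h^*_{\mathbb C}])\subseteq\mathbb C[\mathfrak h^*_{\mathbb C}]$, then $T$ lies in the image of the natural map $\mathscr S\to\mathscr T$.
   Context: Let $(X^*,\Phi,X_*,\Phi^\vee)$ be a root datum with Weyl group $W$ and $\mathfrak h^*=X^*\otimes\mathbb R$. Let $\widetilde W=X^*\rtimes W$ (extended affine Weyl group) act on $\mathfrak h^*_{\mathbb C}$ by affine transformations (translations by $X^*$ and the linear $W$-action). An element $s\in\widetilde W$ is a reflection if its fixed-point locus $H_s$ in $\mathfrak h^*_{\mathbb C}$ is an affine hyperplane; let $\widetilde W^\heartsuit$ be the set of reflections and for each $s$ fix an affine function $\ell_s$ with zero locus $H_s$. For $w\in\widetilde W$ let $t_w$ be the operator $(t_wP)(\alpha)=P(w^{-1}\alpha)$ on $\mathbb C[\mathfrak h^*_{\mathbb C}]$ (and on its fraction field $\mathbb C(\mathfrak h^*_{\mathbb C})$). Let $\mathscr R$ be the algebra of endomorphisms of $\mathbb C[\mathfrak h^*_{\mathbb C}]$ generated by all $t_w$ and multiplications by polynomials, viewed as a left $\mathbb C[\mathfrak h^*_{\mathbb C}]$-module. Put $\mathscr S=\mathbb C[\mathfrak h^*_{\mathbb C}][\ell_s^{-1}: s\in\widetilde W^\heartsuit]\otimes_{\mathbb C[\mathfrak h^*_{\mathbb C}]}\mathscr R$ and $\mathscr T=\mathbb C(\mathfrak h^*_{\mathbb C})\otimes_{\mathbb C[\mathfrak h^*_{\mathbb C}]}\mathscr R$,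 regarded as operators on $\mathbb C(\mathfrak h^*_{\mathbb C})$. *)

(* Defs.v *)
From HB Require Import structures.
From Stdlib Require List.
From mathcomp Require Import all_boot all_order all_algebra.
Set Implicit Arguments. Unset Strict Implicit. Unset Printing Implicit Defensive.
Import Order.TTheory GRing.Theory Num.Theory.
Local Open Scope ring_scope.

(* X^* = Z^r (row vectors), X_* = Z^r with the standard pairing. *)
Definition ipair (r : nat) (x y : 'rV[int]_r) : int := \sum_i x 0 i * y 0 i.

Definition srefl (r : nat) (x y z : 'rV[int]_r) : 'rV[int]_r := z - ipair z y *: x.

(* A root datum: the finite list of pairs (alpha, alpha^vee); the map
   alpha |-> alpha^vee is a bijection Phi -> Phi^vee. *)
Definition is_root_datum (r : nat) (rd : seq ('rV[int]_r * 'rV[int]_r)) : Prop :=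
  [/\ uniq (map fst rd), uniq (map snd rd),
      (forall p, p \in rd -> ipair p.1 p.2 = 2),
      (forall p q, p \in rd -> q \in rd -> srefl p.1 p.2 q.1 \in map fst rd) &
      (forall p q, p \in rd -> q \in rd -> srefl p.2 p.1 q.2 \in map snd rd)].

Section Complex.
Variable C : numClosedFieldType.
Variable r : nat.

(* h^*_C = C^r (row vectors) *)
Definition ivec (x : 'rV[int]_r) : 'rV[C]_r := map_mx (fun z : int => z%:~R) x.
Definition dotv (u v : 'rV[C]_r) : C := \sum_i u 0 i * v 0 i.

Inductive is_poly : ('rV[C]_r -> C) -> Prop :=
| poly_const (c : C) : is_poly (fun _ => c)
| poly_coord (i : 'I_r) : is_poly (fun v => v 0 i)
| poly_add f g : is_poly f -> is_poly g -> is_poly (fun v => f v + g v)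
| poly_mul f g : is_poly f -> is_poly g -> is_poly (fun v => f v * g v).

(* matrix of s_alpha acting on row vectors: v |-> v - <v,alpha^vee> alpha *)
Definition reflmx (p : 'rV[int]_r * 'rV[int]_r) : 'M[C]_r :=
  1%:M - (ivec p.2)^T *m ivec p.1.

Definition inW (rd : seq ('rV[int]_r * 'rV[int]_r)) (M : 'M[C]_r) : Prop :=
  exists s : seq ('rV[int]_r * 'rV[int]_r),
    all (mem rd) s /\ M = foldr (fun p A => reflmx p *m A) 1%:M s.

(* element (lam, w) of X^* x| W acting affinely: v |-> w v + lam, and its inverse *)
Definition wact (lam : 'rV[int]_r) (M : 'M[C]_r) (v : 'rV[C]_r) : 'rV[C]_r :=
  v *m M + ivec lam.
Definition winv (lam : 'rV[int]_r) (M : 'M[C]_r) (v : 'rV[C]_r) : 'rV[C]_r :=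
  (v - ivec lam) *m invmx M.

(* reflections of the extended affine Weyl group: fixed locus is an affine hyperplane *)
Definition is_refl rd (lam : 'rV[int]_r) (M : 'M[C]_r) : Prop :=
  inW rd M /\
  exists (a : 'rV[C]_r) (c : C), a != 0 /\
    forall v, wact lam M v = v <-> dotv v a = c.

Definition refl_affine rd (l : 'rV[C]_r -> C) : Prop :=
  exists (a : 'rV[C]_r) (c : C) (lam : 'rV[int]_r) (M : 'M[C]_r),
    [/\ is_refl rd lam M,
        (forall v, l v = dotv v a + c) &
        (forall v, l v = 0 <-> wact lam M v = v)].

(* a formal term  (num/den) t_w  with w = (lam, M) *)
Record term := Term {
  t_lam : 'rV[int]_r;
  t_mat : 'M[C]_r;
  t_num : 'rV[C]_r -> C;
  t_den : 'rV[C]_r -> C }.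

(* T = sum of terms is an element of scriptT: rational coefficients, w in W~ *)
Definition T_elem rd (T : seq term) : Prop :=
  forall t, List.In t T ->
    [/\ inW rd (t_mat t), is_poly (t_num t), is_poly (t_den t) &
        exists v, t_den t v != 0].

(* coefficients in C[h^*][l_s^{-1}] : numerator polynomial, denominator a
   product of the l_s *)
Definition S_elem rd (T : seq term) : Prop :=
  forall t, List.In t T ->
    [/\ inW rd (t_mat t), is_poly (t_num t) &
        exists (k : nat) (ls : 'I_k -> 'rV[C]_r -> C),
          (forall i, refl_affine rd (ls i)) /\
          (forall v, t_den t v = \prod_i ls i v)].

(* value at v of T applied to the rational function a/b *)
Definition applyT (T : seq term) (a b : 'rV[C]_r -> C) (v : 'rV[C]_r) : C :=
  \sum_(t <- T) (t_num t v / t_den t v) *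
       (a (winv (t_lam t) (t_mat t) v) / b (winv (t_lam t) (t_mat t) v)).

Definition defined_at (T : seq term) (b : 'rV[C]_r -> C) (v : 'rV[C]_r) : Prop :=
  forall t, List.In t T ->
    t_den t v != 0 /\ b (winv (t_lam t) (t_mat t) v) != 0.

End Complex.

(* Main.v *)
Require Import Defs.
From HB Require Import structures.
From Stdlib Require List.
From Stdlib Require Import FunctionalExtensionality Classical.
From mathcomp Require Import all_boot all_order all_algebra ring.
Import Order.TTheory GRing.Theory Num.Theory.
Local Open Scope ring_scope.
Set Implicit Arguments. Unset Strict Implicit.

Section PolyFun.
Variable C : numClosedFieldType.
Variable r : nat.
Notation vec := 'rV[C]_r.
Implicit Types (f g P Q : 'rV[C]_r -> C).

Lemma is_poly_ext f g : (forall v, f v = g v) -> is_poly f -> is_poly g.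
Proof. by move=> H; have -> : g = f by apply: functional_extensionality => v; rewrite H. Qed.

Lemma poly_cst (c : C) : is_poly (fun _ : vec => c).
Proof. exact: poly_const. Qed.

Lemma poly_addP f g : is_poly f -> is_poly g -> is_poly (fun v => f v + g v).
Proof. exact: poly_add. Qed.

Lemma poly_mulP f g : is_poly f -> is_poly g -> is_poly (fun v => f v * g v).
Proof. exact: poly_mul. Qed.

Lemma poly_oppP f : is_poly f -> is_poly (fun v => - f v).
Proof.
move=> Hf; apply: (is_poly_ext (f:=fun v => (-1) * f v)) ; first by move=> v; rewrite mulN1r.
by apply: poly_mul => //; apply: poly_const.
Qed.

Lemma poly_subP f g : is_poly f -> is_poly g -> is_poly (fun v => f v - g v).
Proof. by move=> Hf Hg; apply: poly_add => //; apply: poly_oppP. Qed.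

Lemma poly_sumP (I : Type) (s : seq I) (F : I -> vec -> C) :
  (forall i, is_poly (F i)) -> is_poly (fun v => \sum_(i <- s) F i v).
Proof.
move=> H; elim: s => [|i s IH].
  by apply: (is_poly_ext (f:=fun _ => 0)) => [v|]; rewrite ?big_nil //; apply: poly_const.
apply: (is_poly_ext (f:=fun v => F i v + \sum_(j <- s) F j v)) => [v|]; first by rewrite big_cons.
exact: poly_add.
Qed.

Lemma poly_prodP (I : Type) (s : seq I) (F : I -> vec -> C) :
  (forall i, List.In i s -> is_poly (F i)) -> is_poly (fun v => \prod_(i <- s) F i v).
Proof.
elim: s => [|i s IH] H.
  by apply: (is_poly_ext (f:=fun _ => 1)) => [v|]; rewrite ?big_nil //; apply: poly_const.
apply: (is_poly_ext (f:=fun v => F i v * \prod_(j <- s) F j v)) => [v|]; first by rewrite big_cons.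
apply: poly_mul; first by apply: H; left.
by apply: IH => j Hj; apply: H; right.
Qed.

Lemma poly_comp {P} (m : vec -> vec) : is_poly P ->
  (forall i, is_poly (fun v => m v 0 i)) -> is_poly (fun v => P (m v)).
Proof.
move=> HP Hm; elim: HP => [c|i|f g _ Hf _ Hg|f g _ Hf _ Hg].
- exact: poly_const.
- exact: Hm.
- exact: poly_add.
- exact: poly_mul.
Qed.

Lemma poly_dot (a : vec) (c : C) : is_poly (fun v : vec => dotv v a + c).
Proof.
apply: poly_add; last exact: poly_const.
rewrite /dotv; apply: poly_sumP => i; apply: poly_mul; first exact: poly_coord.
exact: poly_const.
Qed.

Lemma poly_mulmx (A : 'M[C]_r) (b : vec) (i : 'I_r) :
  is_poly (fun v : vec => (v *m A + b) 0 i).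
Proof.
apply: (is_poly_ext (f:=fun v => \sum_j (v 0 j * A j i) + b 0 i)) .
  by move=> v; rewrite !mxE.
apply: poly_add; last exact: poly_const.
apply: poly_sumP => j; apply: poly_mul; [exact: poly_coord| exact: poly_const].
Qed.

Lemma poly_affine_comp P (A : 'M[C]_r) (b : vec) : is_poly P ->
  is_poly (fun v => P (v *m A + b)).
Proof. by move=> HP; apply: poly_comp => // i; apply: poly_mulmx. Qed.

Lemma winvE (lam : 'rV[int]_r) (M : 'M[C]_r) (v : vec) :
  winv lam M v = v *m invmx M + (- (ivec C lam *m invmx M)).
Proof. by rewrite /winv mulmxBl. Qed.

Lemma poly_winv P lam M : is_poly P -> is_poly (fun v => P (winv lam M v)).
Proof.
move=> HP; apply: (is_poly_ext (f:=fun v => P (v *m invmx M + (- (ivec C lam *m invmx M))))) .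
  by move=> v; rewrite winvE.
exact: poly_affine_comp.
Qed.

Lemma poly_line {f} : is_poly f -> forall a b : vec,
  exists p : {poly C}, forall t, f (a + t *: b) = p.[t].
Proof.
move=> Hf a b; elim: Hf => [c|i|f1 g _ [p Hp] _ [q Hq]|f1 g _ [p Hp] _ [q Hq]].
- by exists c%:P => t; rewrite hornerC.
- exists ((a 0 i)%:P + (b 0 i)%:P * 'X) => t.
  by rewrite !mxE hornerD hornerC hornerM hornerX hornerC mulrC.
- by exists (p + q) => t; rewrite hornerD Hp Hq.
- by exists (p * q) => t; rewrite hornerM Hp Hq.
Qed.

Lemma poly_all_roots (p : {poly C}) : (forall t, p.[t] = 0) -> p = 0.
Proof.
move=> H; apply/eqP; apply/negPn/negP => Hp.
have : (size [seq (i%:R : C) | i <- iota 0 (size p)] < size p)%N.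
  apply: max_poly_roots => //.
    by apply/allP => x /mapP [i _ ->]; apply/rootP; apply: H.
  rewrite map_inj_uniq ?iota_uniq // => i j /eqP; rewrite eqr_nat => /eqP.
  done.
by rewrite size_map size_iota ltnn.
Qed.

Lemma poly_domain {P Q} : is_poly P -> is_poly Q -> (forall v, P v * Q v = 0) ->
  (exists v, Q v != 0) -> forall v, P v = 0.
Proof.
move=> HP HQ H [v1 Hv1] v0; apply/eqP/negPn/negP => Hv0.
have [p Hp] := poly_line HP v0 (v1 - v0).
have [q Hq] := poly_line HQ v0 (v1 - v0).
have Hpq : p * q = 0.
  by apply: poly_all_roots => t; rewrite hornerM -Hp -Hq H.
move/eqP: Hpq; rewrite mulf_eq0 => /orP [] /eqP Hz.
- by move: Hv0; rewrite -(addr0 v0) -(scale0r (v1 - v0)) Hp Hz horner0 eqxx.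
- move: Hv1; have -> : v1 = v0 + 1 *: (v1 - v0) by rewrite scale1r addrC subrK.
  by rewrite Hq Hz horner0 eqxx.
Qed.

Lemma poly_nz_mul {P Q} : is_poly P -> is_poly Q -> (exists v, P v != 0) ->
  (exists v, Q v != 0) -> exists v, P v * Q v != 0.
Proof.
move=> HP HQ [v Hv] HQn; apply: not_all_not_ex => H.
have Hz : forall w, P w * Q w = 0.
  by move=> w; apply/eqP/negPn/negP => Hw; apply: (H w).
by move: Hv; rewrite (poly_domain HP HQ Hz HQn v) eqxx.
Qed.

Lemma poly_div {P phi} (e : vec) : is_poly P -> is_poly phi ->
  exists Q, is_poly Q /\ forall v, P v - P (v - phi v *: e) = phi v * Q v.
Proof.
move=> HP Hphi.
have Hm : forall i, is_poly (fun v : vec => (v - phi v *: e) 0 i).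
  move=> i; apply: (is_poly_ext (f:=fun v => v 0 i - phi v * e 0 i)) .
    by move=> v; rewrite !mxE.
  apply: poly_subP; first exact: poly_coord.
  by apply: poly_mul => //; apply: poly_const.
elim: HP => [c|i|f g Hf [Q1 [HQ1 E1]] Hg [Q2 [HQ2 E2]]|f g Hf [Q1 [HQ1 E1]] Hg [Q2 [HQ2 E2]]].
- by exists (fun _ => 0); split; [apply: poly_const|move=> v; rewrite subrr mulr0].
- exists (fun _ => e 0 i); split; first exact: poly_const.
  by move=> v; rewrite !mxE opprB addrC subrK.
- exists (fun v => Q1 v + Q2 v); split; first exact: poly_add.
  by move=> v; rewrite mulrDr -E1 -E2 opprD addrACA.
- exists (fun v => Q1 v * g v + f (v - phi v *: e) * Q2 v); split.
    apply: poly_add; apply: poly_mul => //; exact: poly_comp.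
  move=> v; rewrite mulrDr mulrA -E1 mulrCA -E2.
  by rewrite mulrBl mulrBr addrA subrK.
Qed.

End PolyFun.

Section Weyl.
Variable C : numClosedFieldType.
Variable r : nat.
Variable rd : seq ('rV[int]_r * 'rV[int]_r).
Hypothesis Hrd : is_root_datum rd.
Notation vec := 'rV[C]_r.

Definition prodW (s : seq ('rV[int]_r * 'rV[int]_r)) : 'M[C]_r :=
  foldr (fun p A => reflmx C p *m A) 1%:M s.

Lemma foldrW s (z : 'M[C]_r) : foldr (fun p A => reflmx C p *m A) z s = prodW s *m z.
Proof. by elim: s => [|p s IH] /=; rewrite ?mul1mx // IH mulmxA. Qed.

Lemma prodW_cat s1 s2 : prodW (s1 ++ s2) = prodW s1 *m prodW s2.
Proof. by rewrite /prodW foldr_cat foldrW. Qed.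

Lemma ivecE (x : 'rV[int]_r) : ivec C x = map_mx intr x.
Proof. by []. Qed.

Lemma reflmx_invol p : p \in rd -> reflmx C p *m reflmx C p = 1%:M.
Proof.
case: Hrd => _ _ H2 _ _ Hp.
set Y := (ivec C p.2)^T; set X := ivec C p.1.
have XY : X *m Y = 2%:M.
  apply/matrixP => i j; rewrite !ord1 !mxE.
  rewrite (eq_bigr (fun k => ((p.1 0 k * p.2 0 k)%:~R : C))); last first.
    by move=> k _; rewrite !mxE intrM.
  by rewrite -rmorph_sum /= -/(ipair p.1 p.2) (H2 _ Hp) /=.
rewrite /reflmx -/X -/Y mulmxBl mul1mx mulmxBr mulmx1 -!mulmxA (mulmxA X) XY.
rewrite mul_scalar_mx -scalemxAr -[2%:R]/(1 + 1) scalerDl scale1r.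
by rewrite opprB addrK subrK.
Qed.

Lemma inW_mul M N : inW (C:=C) rd M -> inW (C:=C) rd N -> inW (C:=C) rd (M *m N).
Proof.
move=> [s1 [H1 ->]] [s2 [H2 ->]]; exists (s1 ++ s2); split.
  by rewrite all_cat H1 H2.
by rewrite -!/(prodW _) prodW_cat.
Qed.

Lemma prodW1 p : prodW [:: p] = reflmx C p.
Proof. rewrite /prodW /=. exact: mulmx1. Qed.

Lemma prodW_rev {s} : all (mem rd) s -> prodW s *m prodW (rev s) = 1%:M.
Proof.
elim: s => [|p s IH].
  by move=> _; rewrite /prodW /=; exact: mulmx1.
move=> /andP [Hp Hs].
have -> : prodW (p :: s) = reflmx C p *m prodW s by [].
rewrite rev_cons -cats1 prodW_cat prodW1.
by rewrite (mulmxA (reflmx C p *m prodW s)) -(mulmxA (reflmx C p)) (IH Hs) mulmx1 reflmx_invol.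
Qed.

Lemma inW_inv M : inW (C:=C) rd M -> M \in unitmx /\ inW (C:=C) rd (invmx M).
Proof.
move=> [s [Hs ->]]; rewrite -/(prodW s).
have H := prodW_rev Hs.
have [U _] := mulmx1_unit H.
split => //; exists (rev s); split; first by rewrite all_rev.
rewrite -/(prodW _).
by rewrite -[invmx _]mulmx1 -H mulmxA mulVmx // mul1mx.
Qed.

Lemma inW_unit M : inW (C:=C) rd M -> M \in unitmx.
Proof. by move=> /inW_inv []. Qed.

Lemma inW_int M : inW (C:=C) rd M -> exists Mi : 'M[int]_r, M = map_mx intr Mi.
Proof.
move=> [s [_ ->]]; rewrite -/(prodW s); elim: s => [|p s [Mi HMi]].
  by exists 1%:M; rewrite map_mx1.
exists ((1%:M - p.2^T *m p.1) *m Mi); rewrite map_mxM map_mxB map_mx1 map_mxM.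
have -> : prodW (p :: s) = reflmx C p *m prodW s by [].
by rewrite HMi /reflmx map_trmx.
Qed.

End Weyl.

Section Keys.
Variable C : numClosedFieldType.
Variable r : nat.
Variable rd : seq ('rV[int]_r * 'rV[int]_r).
Hypothesis Hrd : is_root_datum rd.
Notation vec := 'rV[C]_r.
Notation key := ('rV[int]_r * 'M[C]_r)%type.

Definition hk (k0 k1 : key) (v : vec) : vec :=
  winv k0.1 k0.2 v - winv k1.1 k1.2 v.

Lemma dotvE (u c : vec) : dotv u c = (u *m c^T) 0 0.
Proof. by rewrite /dotv mxE; apply: eq_bigr => i _; rewrite mxE. Qed.

Lemma dotv_affine (v c : vec) (A : 'M[C]_r) (b : vec) :
  dotv (v *m A + b) c = dotv v (c *m A^T) + dotv b c.
Proof. by rewrite !dotvE mulmxDl mxE trmx_mul trmxK mulmxA. Qed.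

Lemma dotvB (x y c : vec) : dotv (x - y) c = dotv x c - dotv y c.
Proof. by rewrite !dotvE mulmxBl !mxE. Qed.

Lemma dotv0 (c : vec) : dotv 0 c = 0.
Proof. by rewrite dotvE mul0mx mxE. Qed.

Lemma dotvC (u c : vec) : dotv u c = dotv c u.
Proof. by rewrite /dotv; apply: eq_bigr => i _; rewrite mulrC. Qed.

Lemma dotvZ (s : C) (u c : vec) : dotv (s *: u) c = s * dotv u c.
Proof. by rewrite /dotv mulr_sumr; apply: eq_bigr => i _; rewrite mxE mulrA. Qed.

Lemma dotv0r (u : vec) : dotv u 0 = 0.
Proof. by rewrite dotvC dotv0. Qed.

Lemma dotv_delta (v : vec) i : dotv v (delta_mx 0 i) = v 0 i.
Proof.
rewrite /dotv (bigD1 i) //= big1 ?addr0; first by rewrite mxE !eqxx mulr1.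
by move=> j Hj; rewrite mxE (negbTE Hj) andbF mulr0.
Qed.

Lemma hk_affine k0 k1 : exists (A : 'M[C]_r) (b : vec), forall v, hk k0 k1 v = v *m A + b.
Proof.
exists (invmx k0.2 - invmx k1.2); exists (ivec C k1.1 *m invmx k1.2 - ivec C k0.1 *m invmx k0.2).
move=> v; rewrite /hk /winv !mulmxBl mulmxBr.
by rewrite opprB addrACA [RHS]addrACA [X in _ + X = _]addrC.
Qed.

Lemma winv_wact (l : 'rV[int]_r) (M : 'M[C]_r) (u : vec) : M \in unitmx -> winv l M (wact l M u) = u.
Proof. by move=> HM; rewrite /winv /wact addrK mulmxK. Qed.

Lemma wact_winv (l : 'rV[int]_r) (M : 'M[C]_r) (v : vec) : M \in unitmx -> wact l M (winv l M v) = v.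
Proof. by move=> HM; rewrite /winv /wact mulmxKV // subrK. Qed.

Lemma fixed_locus (k0 k1 : key) : inW rd k0.2 -> inW rd k1.2 ->
  exists (ls : 'rV[int]_r) (Ms : 'M[C]_r), inW rd Ms /\
    forall v, wact ls Ms v = v <-> hk k0 k1 v = 0.
Proof.
move=> H0 H1.
have [U0 Hi0] := inW_inv Hrd H0.
have U1 := inW_unit Hrd H1.
have HMs := inW_mul Hi0 H1.
have [Mi HMi] := inW_int HMs.
exists (k1.1 - k0.1 *m Mi); exists (invmx k0.2 *m k1.2); split => // v.
have E : wact (k1.1 - k0.1 *m Mi) (invmx k0.2 *m k1.2) v = wact k1.1 k1.2 (winv k0.1 k0.2 v).
  rewrite /wact /winv HMi ivecE map_mxB map_mxM -!ivecE -HMi.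
  by rewrite mulmxBl !mulmxA mulmxBl addrCA addrC.
rewrite E /hk; split => H.
  by rewrite -{2}H winv_wact // subrr.
by move/eqP: H; rewrite subr_eq0 => /eqP ->; rewrite wact_winv.
Qed.

Lemma hk_nz (k0 k1 : key) : inW rd k0.2 -> inW rd k1.2 -> k0 != k1 ->
  exists v, hk k0 k1 v != 0.
Proof.
move=> H0 H1 Hne; apply: NNPP => Hn.
have Hz : forall v, winv k0.1 k0.2 v = winv k1.1 k1.2 v.
  move=> v; apply/eqP; rewrite -subr_eq0; apply/negPn/negP => Hv.
  by apply: Hn; exists v.
have U0 := inW_unit Hrd H0; have U1 := inW_unit Hrd H1.
have Hb : ivec C k0.1 *m invmx k0.2 = ivec C k1.1 *m invmx k1.2.
  by have := Hz 0; rewrite /winv !sub0r !mulNmx => /oppr_inj.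
have HA : invmx k0.2 = invmx k1.2.
  apply/row_matrixP => i; rewrite !rowE.
  have := Hz (delta_mx 0 i); rewrite /winv !mulmxBl Hb => /addIr.
  done.
have HM : k0.2 = k1.2 by rewrite -(invmxK k0.2) HA invmxK.
have HL : k0.1 = k1.1.
  have : ivec C k0.1 = ivec C k1.1.
    by rewrite -(mulmxKV U0 (ivec C k0.1)) -(mulmxKV U0 (ivec C k1.1)) Hb HA.
  move=> /matrixP E; apply/matrixP => i j; have := E i j; rewrite !mxE.
  by move/eqP; rewrite eqr_int => /eqP.
by move: Hne; rewrite (surjective_pairing k0) (surjective_pairing k1) HM HL eqxx.
Qed.

End Keys.

Section Main.
Variable C : numClosedFieldType.
Variable r : nat.
Variable rd : seq ('rV[int]_r * 'rV[int]_r).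
Hypothesis Hrd : is_root_datum rd.
Notation vec := 'rV[C]_r.
Notation key := ('rV[int]_r * 'M[C]_r)%type.
Variable T : seq (term C r).
Hypothesis HT : T_elem rd T.
Hypothesis Hpres : forall P : 'rV[C]_r -> C, is_poly P ->
       exists Q : 'rV[C]_r -> C, is_poly Q /\
         forall v, (forall t, List.In t T -> t_den t v != 0) ->
           Q v = applyT T P (fun _ => 1) v.

Definition keyt (t : term C r) : key := (t_lam t, t_mat t).
Definition D (v : vec) : C := \prod_(t <- T) t_den t v.

Lemma den_poly t : List.In t T -> is_poly (t_den t).
Proof. by move=> /HT []. Qed.
Lemma num_poly t : List.In t T -> is_poly (t_num t).
Proof. by move=> /HT []. Qed.
Lemma mat_W t : List.In t T -> inW rd (t_mat t).
Proof. by move=> /HT []. Qed.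

Lemma D_poly : is_poly D.
Proof. by apply: poly_prodP => t Ht; apply: den_poly. Qed.

Lemma prod_sub_nz (T' : seq (term C r)) : (forall t, List.In t T' -> List.In t T) ->
  exists v : vec, \prod_(t <- T') t_den t v != 0.
Proof.
elim: T' => [|t T' IH] Hs.
  by exists 0; rewrite big_nil oner_neq0.
have [v Hv] : exists v, t_den t v * \prod_(t <- T') t_den t v != 0.
  apply: poly_nz_mul.
  - by apply: den_poly; apply: Hs; left.
  - by apply: poly_prodP => t' Ht'; apply: den_poly; apply: Hs; right.
  - by have [_ _ _] := HT (Hs t (or_introl erefl)).
  - by apply: IH => t' Ht'; apply: Hs; right.
by exists v; rewrite big_cons.
Qed.

Lemma D_nz : exists v, D v != 0.
Proof. exact: prod_sub_nz. Qed.

Lemma prod_factor (T' : seq (term C r)) t : (forall t, List.In t T' -> List.In t T) ->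
  List.In t T' -> exists R, is_poly R /\
     forall v, \prod_(t <- T') t_den t v = t_den t v * R v.
Proof.
elim: T' => [|t0 T' IH] Hs //= [<-|Hin].
  exists (fun v => \prod_(t <- T') t_den t v); split.
    by apply: poly_prodP => t' Ht'; apply: den_poly; apply: Hs; right.
  by move=> v; rewrite big_cons.
have [R [HR ER]] := IH (fun t' H => Hs t' (or_intror H)) Hin.
exists (fun v => t_den t0 v * R v); split.
  by apply: poly_mul => //; apply: den_poly; apply: Hs; left.
by move=> v; rewrite big_cons ER mulrCA.
Qed.

Lemma D_factor t : List.In t T -> exists R, is_poly R /\ forall v, D v = t_den t v * R v.
Proof. exact: prod_factor. Qed.

Lemma U_den v : D v != 0 -> forall t, List.In t T -> t_den t v != 0.
Proof.
move=> Hv t Ht; have [R [_ ER]] := D_factor Ht.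
by move: Hv; rewrite ER mulf_eq0 negb_or => /andP [].
Qed.

Lemma den_U v : (forall t, List.In t T -> t_den t v != 0) -> D v != 0.
Proof.
rewrite /D; elim: T => [|t T' IH] H; first by rewrite big_nil oner_neq0.
rewrite big_cons mulf_neq0 //; first by apply: H; left.
by apply: IH => t' Ht'; apply: H; right.
Qed.

Definition reg (g : vec -> C) : Prop :=
  exists H, is_poly H /\ forall v, D v != 0 -> g v * D v = H v.

Lemma reg_poly g : is_poly g -> reg g.
Proof. by move=> Hg; exists (fun v => g v * D v); split => //; apply: poly_mul => //; exact: D_poly. Qed.

Lemma reg_mulp g p : reg g -> is_poly p -> reg (fun v => g v * p v).
Proof.
move=> [H [HH EH]] Hp; exists (fun v => H v * p v); split; first exact: poly_mul.
by move=> v Hv; rewrite -EH //; ring.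
Qed.

Lemma reg_add g1 g2 : reg g1 -> reg g2 -> reg (fun v => g1 v + g2 v).
Proof.
move=> [H1 [HH1 E1]] [H2 [HH2 E2]]; exists (fun v => H1 v + H2 v); split; first exact: poly_add.
by move=> v Hv; rewrite -E1 // -E2 // mulrDl.
Qed.

Lemma reg_term t : List.In t T -> reg (fun v => t_num t v / t_den t v).
Proof.
move=> Ht; have [R [HR ER]] := D_factor Ht.
exists (fun v => t_num t v * R v); split; first by apply: poly_mul => //; apply: num_poly.
move=> v Hv; have Hd := U_den Hv Ht.
by rewrite ER mulrA divfK.
Qed.

Lemma reg_cancel Qp g phi : is_poly Qp -> reg g -> is_poly phi -> (exists v, phi v != 0) ->
  (forall v, D v != 0 -> Qp v * phi v = g v * phi v) -> forall v, D v != 0 -> Qp v = g v.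
Proof.
move=> HQ [H [HH EH]] Hphi Hnz E.
have HE : forall v, (Qp v * D v - H v) * (phi v * D v) = 0.
  move=> v; have [Hv|Hv] := eqVneq (D v) 0; first by rewrite Hv !mulr0.
  rewrite -EH //; have := E v Hv => E'.
  have -> : (Qp v * D v - g v * D v) * (phi v * D v) = (Qp v * phi v - g v * phi v) * (D v * D v) by ring.
  by rewrite E' subrr mul0r.
have Z := poly_domain (poly_subP (poly_mul HQ D_poly) HH) (poly_mul Hphi D_poly) HE
  (poly_nz_mul Hphi D_poly Hnz D_nz).
move=> v Hv; apply: (mulIf Hv); rewrite EH //; apply/eqP; rewrite -subr_eq0; exact/eqP.
Qed.

Definition F (k : key) (v : vec) : C := \sum_(t <- T | keyt t == k) t_num t v / t_den t v.

Lemma reg_F k : reg (F k).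
Proof.
rewrite /F; have : forall t, List.In t T -> List.In t T by [].
elim: {-2}T => [|t T' IH] Hs.
  have -> : (fun v => \sum_(t0 <- [::] | keyt t0 == k) t_num t0 v / t_den t0 v) = (fun _ => 0).
    by apply: functional_extensionality => v; rewrite big_nil.
  by apply: reg_poly; apply: poly_const.
have R' := IH (fun t' H => Hs t' (or_intror H)).
case: (eqVneq (keyt t) k) => Hk.
  have -> : (fun v => \sum_(t0 <- t :: T' | keyt t0 == k) t_num t0 v / t_den t0 v) =
    (fun v => t_num t v / t_den t v + \sum_(t0 <- T' | keyt t0 == k) t_num t0 v / t_den t0 v).
    by apply: functional_extensionality => v; rewrite big_cons Hk eqxx.
  by apply: reg_add => //; apply: reg_term; apply: Hs; left.
have -> : (fun v => \sum_(t0 <- t :: T' | keyt t0 == k) t_num t0 v / t_den t0 v) =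
  (fun v => \sum_(t0 <- T' | keyt t0 == k) t_num t0 v / t_den t0 v).
  by apply: functional_extensionality => v; rewrite big_cons (negbTE Hk).
exact: R'.
Qed.

Definition winvk (k : key) (v : vec) : vec := winv k.1 k.2 v.

Lemma op_lemma (xs : seq ((vec -> C) * key)) : (forall p, List.In p xs -> is_poly p.1) ->
  forall P, is_poly P -> exists Q, is_poly Q /\ forall v, D v != 0 ->
    Q v = \sum_(t <- T) (t_num t v / t_den t v) *
       (\prod_(p <- xs) (p.1 (winv (t_lam t) (t_mat t) v) - p.1 (winvk p.2 v))) *
       P (winv (t_lam t) (t_mat t) v).
Proof.
elim: xs => [|[x w] xs IH] Hx P HP.
  have [Q [HQ EQ]] := Hpres HP; exists Q; split => // v Hv.
  rewrite EQ; last by apply: U_den.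
  by rewrite /applyT; apply: eq_bigr => t _; rewrite big_nil mulr1 divr1.
have Hx' : forall p, List.In p xs -> is_poly p.1 by move=> p Hp; apply: Hx; right.
have Hxx : is_poly x by apply: (Hx (x, w)); left.
have [Q1 [HQ1 E1]] := IH Hx' (fun u => x u * P u) (poly_mul Hxx HP).
have [Q2 [HQ2 E2]] := IH Hx' P HP.
exists (fun v => Q1 v - x (winvk w v) * Q2 v); split.
  by apply: poly_subP => //; apply: poly_mul => //; apply: (poly_winv w.1 w.2 Hxx).
move=> v Hv; rewrite E1 // E2 // mulr_sumr -sumrB; apply: eq_bigr => t _.
rewrite big_cons /=; ring.
Qed.

Lemma peel (k k1 : key) : inW rd k.2 -> inW rd k1.2 -> k1 != k ->
  exists ls1 : seq (vec -> C), (forall l, List.In l ls1 -> refl_affine rd l) /\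
  forall g, reg g ->
    (forall c : vec, exists N, is_poly N /\ forall v, D v != 0 -> N v = g v * dotv (hk k k1 v) c) ->
    exists N, is_poly N /\ forall v, D v != 0 -> N v = g v * \prod_(l <- ls1) l v.
Proof.
move=> Hk Hk1 Hne.
have [A [b Hh]] := hk_affine k k1.
have Hphi : forall c v, dotv (hk k k1 v) c = dotv v (c *m A^T) + dotv b c.
  by move=> c v; rewrite Hh dotv_affine.
case: (classic (exists c, c *m A^T = 0 /\ dotv b c != 0)) => [[c [Hc Hbc]]|Hn1].
  exists [::]; split => // g Hg HN.
  have [N [HN' EN]] := HN c.
  exists (fun v => N v * (dotv b c)^-1); split.
    by apply: poly_mul => //; apply: poly_const.
  move=> v Hv; rewrite EN // Hphi Hc dotv0r add0r big_nil mulr1 mulfK //.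
have H1 : forall c, c *m A^T = 0 -> dotv b c = 0.
  move=> c Hc; apply/eqP/negPn/negP => Hb; apply: Hn1; by exists c.
have [c1 Ha1] : exists c1 : vec, c1 *m A^T != 0.
  apply: NNPP => Hn.
  have Hz : forall c : vec, c *m A^T = 0.
    by move=> c; apply/eqP/negPn/negP => Hc; apply: Hn; exists c.
  have Hne' : k != k1 by rewrite eq_sym.
  have [v Hv] := hk_nz Hrd Hk Hk1 Hne'.
  apply: (negP Hv); apply/eqP/rowP => j; rewrite [RHS]mxE.
  by rewrite -(dotv_delta (hk k k1 v)) Hphi Hz dotv0r add0r H1.
set a1 := c1 *m A^T in Ha1.
set d1 := dotv b c1.
have [i Hi] : exists i, a1 0 i != 0.
  apply: NNPP => Hn; apply: (negP Ha1); apply/eqP/rowP => j; rewrite [RHS]mxE.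
  by apply/eqP/negPn/negP => Hj; apply: Hn; exists j.
set e : vec := (a1 0 i)^-1 *: delta_mx 0 i.
have He : dotv e a1 = 1 by rewrite dotvZ dotvC dotv_delta mulVf.
set phi1 := fun v => dotv (hk k k1 v) c1.
have Ephi1 : forall v, phi1 v = dotv v a1 + d1 by move=> v; rewrite /phi1 Hphi.
have Hphi1p : is_poly phi1.
  by apply: (is_poly_ext (f := fun v => dotv v a1 + d1)) => [v|]; rewrite ?Ephi1 //; apply: poly_dot.
have Hpi : forall v, phi1 (v - phi1 v *: e) = 0.
  by move=> v; rewrite [phi1 (_ - _)]Ephi1 dotvB dotvZ He mulr1 Ephi1; ring.
case: (classic (exists v0, phi1 v0 = 0 /\ hk k k1 v0 != 0)) => [[v0 [Hv0 Hhv0]]|Hn2].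
  have [j Hj] : exists j, hk k k1 v0 0 j != 0.
    apply: NNPP => Hn; apply: (negP Hhv0); apply/eqP/rowP => j; rewrite [RHS]mxE.
    by apply/eqP/negPn/negP => Hj; apply: Hn; exists j.
  set phi2 := fun v => dotv (hk k k1 v) (delta_mx 0 j).
  have Hphi2p : is_poly phi2.
    apply: (is_poly_ext (f := fun v => dotv v ((delta_mx 0 j) *m A^T) + dotv b (delta_mx 0 j))).
      by move=> v; rewrite /phi2 Hphi.
    exact: poly_dot.
  exists [::]; split => // g Hg HN.
  have [N1 [HN1 EN1]] := HN c1.
  have [N2 [HN2 EN2]] := HN (delta_mx 0 j).
  have Hcross : forall v, N1 v * phi2 v - N2 v * phi1 v = 0.
    have HZ : forall v, (N1 v * phi2 v - N2 v * phi1 v) * D v = 0.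
      move=> v; have [Hv|Hv] := eqVneq (D v) 0; first by rewrite Hv mulr0.
      by rewrite EN1 // EN2 // /phi1 /phi2; ring.
    apply: (poly_domain _ D_poly HZ D_nz).
    by apply: poly_subP; apply: poly_mul.
  have Hpoly_pi : forall i0, is_poly (fun v : vec => (v - phi1 v *: e) 0 i0).
    move=> i0; apply: (is_poly_ext (f := fun v => v 0 i0 - phi1 v * e 0 i0)).
      by move=> v; rewrite !mxE.
    apply: poly_subP; first exact: poly_coord.
    by apply: poly_mul => //; apply: poly_const.
  have HN1pi : forall v, N1 (v - phi1 v *: e) = 0.
    have HZ : forall v, N1 (v - phi1 v *: e) * phi2 (v - phi1 v *: e) = 0.
      by move=> v; have := Hcross (v - phi1 v *: e); rewrite Hpi mulr0 subr0.
    have P1 : is_poly (fun v => N1 (v - phi1 v *: e)) by exact (poly_comp (m := fun v => v - phi1 v *: e) HN1 Hpoly_pi).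
    have P2 : is_poly (fun v => phi2 (v - phi1 v *: e)) by apply: (poly_comp (m := fun v => v - phi1 v *: e) Hphi2p Hpoly_pi).
    move=> v; apply: (poly_domain P1 P2 HZ).
    by exists v0; rewrite Hv0 scale0r subr0 /phi2 dotv_delta.
  have [Q [HQ EQ]] := poly_div e HN1 Hphi1p.
  exists Q; split => // v Hv.
  rewrite big_nil mulr1.
  apply: (reg_cancel HQ Hg Hphi1p) => //.
    exists ((1 - d1) *: e); rewrite Ephi1 dotvZ He mulr1 subrK; exact: oner_neq0.
  move=> w Hw; rewrite mulrC -EQ HN1pi subr0 EN1 //.
have Hn2' : forall v, phi1 v = 0 -> hk k k1 v = 0.
  move=> v Hv; apply/eqP/negPn/negP => Hh0; apply: Hn2; by exists v.
have [ls [Ms [HMs Hfix]]] := fixed_locus Hrd Hk Hk1.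
exists [:: phi1]; split.
  move=> l [<-|//]; exists a1; exists d1; exists ls; exists Ms; split.
  - split => //; exists a1; exists (- d1); split => // v.
    rewrite Hfix; split => H.
      by have := Ephi1 v; rewrite /phi1 H dotv0 => /eqP; rewrite eq_sym addr_eq0 => /eqP.
    by apply: Hn2'; rewrite Ephi1 H addNr.
  - exact: Ephi1.
  - move=> v; rewrite Hfix; split => H; first exact: Hn2'.
    by rewrite /phi1 H dotv0.
move=> g Hg HN; have [N1 [HN1 EN1]] := HN c1.
by exists N1; split => // v Hv; rewrite big_cons big_nil mulr1 EN1.
Qed.

Lemma phi_poly (k k1 : key) (c : vec) : is_poly (fun v => dotv (hk k k1 v) c).
Proof.
have [A [b Hh]] := hk_affine k k1.
apply: (is_poly_ext (f := fun v => dotv v (c *m A^T) + dotv b c)); last exact: poly_dot.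
by move=> v; rewrite Hh dotv_affine.
Qed.

Lemma refl_poly (l : vec -> C) : refl_affine rd l -> is_poly l.
Proof.
move=> [a [c [_ [_ [_ El _]]]]].
by apply: (is_poly_ext (f := fun v => dotv v a + c)); [move=> v; rewrite El|exact: poly_dot].
Qed.

Lemma peel_all (k : key) (ks : seq key) : uniq ks ->
  (forall k1, k1 \in ks -> inW rd k1.2 /\ k1 != k) -> inW rd k.2 ->
  forall g, reg g ->
  (forall cs : key -> vec, exists N, is_poly N /\ forall v, D v != 0 ->
      N v = g v * \prod_(k1 <- ks) dotv (hk k k1 v) (cs k1)) ->
  exists ls : seq (vec -> C), (forall l, List.In l ls -> refl_affine rd l) /\
    exists N, is_poly N /\ forall v, D v != 0 -> N v = g v * \prod_(l <- ls) l v.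
Proof.
move=> Hu Hks Hk; elim: ks Hu Hks => [|k1 ks IH] Hu Hks g Hg HN.
  have [N [HN' EN]] := HN (fun _ => 0).
  exists [::]; split => //; exists N; split => // v Hv.
  by rewrite EN // !big_nil.
move: Hu => /= /andP [Hk1ks Hu].
have [Hk1W Hk1k] := Hks k1 (mem_head _ _).
have Hks' : forall k2, k2 \in ks -> inW rd k2.2 /\ k2 != k.
  by move=> k2 Hk2; apply: Hks; rewrite inE Hk2 orbT.
have [ls1 [Hls1 Pr]] := peel Hk Hk1W Hk1k.
have Hprod1 : is_poly (fun v => \prod_(l <- ls1) l v).
  by apply: poly_prodP => l Hl; apply: refl_poly; apply: Hls1.
have Hg' : reg (fun v => g v * \prod_(l <- ls1) l v) by apply: reg_mulp.
have Hyp : forall cs : key -> vec, exists N, is_poly N /\ forall v, D v != 0 ->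
      N v = (g v * \prod_(l <- ls1) l v) * \prod_(k2 <- ks) dotv (hk k k2 v) (cs k2).
  move=> cs.
  set gcs := fun v => g v * \prod_(k2 <- ks) dotv (hk k k2 v) (cs k2).
  have Hgcs : reg gcs.
    apply: reg_mulp => //; apply: poly_prodP => k2 _; exact: phi_poly.
  have Hc : forall c : vec, exists N, is_poly N /\ forall v, D v != 0 -> N v = gcs v * dotv (hk k k1 v) c.
    move=> c; have [N [HN' EN]] := HN (fun k2 => if k2 == k1 then c else cs k2).
    exists N; split => // v Hv; rewrite EN // big_cons eqxx /gcs.
    rewrite (eq_big_seq (fun k2 => dotv (hk k k2 v) (cs k2))); first by ring.
    move=> k2 Hk2; have -> : (k2 == k1) = false; last by [].
    by apply/negbTE; apply: contraNneq Hk1ks => <-.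
  have [N [HN' EN]] := Pr gcs Hgcs Hc.
  by exists N; split => // v Hv; rewrite EN // /gcs; ring.
have [ls2 [Hls2 [N [HN' EN]]]] := IH Hu Hks' (fun v => g v * \prod_(l <- ls1) l v) Hg' Hyp.
exists (ls1 ++ ls2); split.
  by move=> l Hl; case: (List.in_app_or _ _ _ Hl) => Hl'; [apply: Hls1|apply: Hls2].
exists N; split => // v Hv; rewrite EN // big_cat /=; ring.
Qed.

Lemma in_map_key (s : seq (term C r)) t : List.In t s -> keyt t \in map keyt s.
Proof. by elim: s => [|t0 s IH] //= [->|H]; rewrite inE ?eqxx // IH ?orbT. Qed.

Lemma map_key_in (s : seq (term C r)) k : k \in map keyt s -> exists t, List.In t s /\ keyt t = k.
Proof.
elim: s => [|t0 s IH] //=; rewrite inE => /orP [/eqP ->|H]; first by exists t0; split => //; left.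
by have [t [Ht Ek]] := IH H; exists t; split => //; right.
Qed.

Lemma sum_pick (W : seq key) (k0 : key) (x : C) (G : key -> C) : uniq W -> k0 \in W ->
  \sum_(k <- W) (if k0 == k then x else 0) * G k = x * G k0.
Proof.
move=> HU Hk0; rewrite (big_rem k0) //= eqxx big1_seq ?addr0 // => k /andP [_ Hk].
have -> : (k0 == k) = false; last by rewrite mul0r.
apply/negbTE; apply: contraTneq Hk => <-.
by rewrite rem_filter // mem_filter /= eqxx.
Qed.

Lemma regroup_gen (W : seq key) (s : seq (term C r)) (f : term C r -> C) (G : key -> C) :
  uniq W -> (forall t, List.In t s -> keyt t \in W) ->
  \sum_(t <- s) f t * G (keyt t) =
  \sum_(k <- W) (\sum_(t <- s | keyt t == k) f t) * G k.
Proof.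
move=> HU; elim: s => [|t0 s IH] Hs.
  by rewrite big_nil big1 // => k _; rewrite big_nil mul0r.
rewrite big_cons IH; last by move=> t Ht; apply: Hs; right.
have -> : \sum_(k <- W) (\sum_(t <- t0 :: s | keyt t == k) f t) * G k =
   \sum_(k <- W) ((if keyt t0 == k then f t0 else 0) * G k + (\sum_(t <- s | keyt t == k) f t) * G k).
  by apply: eq_bigr => k _; rewrite big_cons; case: ifP => _; rewrite ?mul0r ?add0r // mulrDl.
rewrite big_split /= sum_pick //; by apply: Hs; left.
Qed.

Lemma regroup (s : seq (term C r)) (f : term C r -> C) (G : key -> C) :
  \sum_(t <- s) f t * G (keyt t) =
  \sum_(k <- undup (map keyt s)) (\sum_(t <- s | keyt t == k) f t) * G k.
Proof.
apply: regroup_gen; first exact: undup_uniq.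
by move=> t Ht; rewrite mem_undup; apply: in_map_key.
Qed.

Lemma sum_In_eq (s : seq (term C r)) (F1 F2 : term C r -> C) :
  (forall t, List.In t s -> F1 t = F2 t) -> \sum_(t <- s) F1 t = \sum_(t <- s) F2 t.
Proof.
elim: s => [|t s IH] H; first by rewrite !big_nil.
rewrite !big_cons H; last by left.
by rewrite IH // => t' Ht'; apply: H; right.
Qed.

Lemma key_W (k : key) : k \in map keyt T -> inW rd k.2.
Proof. by move=> /map_key_in [t [Ht <-]]; apply: mat_W. Qed.

Lemma key_result (k : key) : k \in map keyt T ->
  exists ls : seq (vec -> C), (forall l, List.In l ls -> refl_affine rd l) /\
    exists N, is_poly N /\ forall v, D v != 0 -> N v = F k v * \prod_(l <- ls) l v.
Proof.
move=> Hk.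
set W0 := undup (map keyt T).
set ks := [seq k' <- W0 | k' != k].
have Hu : uniq ks by apply: filter_uniq; apply: undup_uniq.
have Hks : forall k1, k1 \in ks -> inW rd k1.2 /\ k1 != k.
  move=> k1; rewrite mem_filter mem_undup => /andP [Hne Hin]; split => //.
  exact: key_W.
apply: (peel_all Hu Hks (key_W Hk) (reg_F k)) => cs.
set xs := [seq ((fun u => dotv u (cs k')), k') | k' <- ks].
have Hxs : forall p, List.In p xs -> is_poly p.1.
  move=> p /List.in_map_iff [k' [<- _]] /=.
  by apply: (is_poly_ext (f := fun u => dotv u (cs k') + 0)); [move=> v; rewrite addr0|exact: poly_dot].
have [Q [HQ EQ]] := op_lemma Hxs (poly_const r 1).
exists Q; split => // v Hv; rewrite EQ // /F mulr_suml [RHS]big_mkcond /=.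
apply: sum_In_eq => t Ht; rewrite mulr1 big_map.
case: (eqVneq (keyt t) k) => Hkt.
  rewrite /hk; congr (_ * _); apply: eq_bigr => k' _ /=.
  by rewrite dotvB -Hkt.
apply/eqP; rewrite mulf_eq0 prodf_seq_eq0; apply/orP; right.
apply/hasP; exists (keyt t).
  by rewrite mem_filter Hkt mem_undup /=; apply: in_map_key.
by rewrite /= subrr eqxx.
Qed.

Lemma nth_In (A : Type) (x0 : A) (s : seq A) i : (i < size s)%N -> List.In (nth x0 s i) s.
Proof.
elim: s i => [|a s IH] [|i] //= Hi; first by left.
by right; apply: IH.
Qed.

Lemma build (ks : seq key) : (forall k, k \in ks -> k \in map keyt T) ->
  exists S : seq (term C r), S_elem rd S /\ map keyt S = ks /\
    forall t, List.In t S -> forall v, D v != 0 -> t_num t v = F (keyt t) v * t_den t v.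
Proof.
elim: ks => [|k ks IH] Hks.
  by exists [::]; split => //.
have [S [HS [HkS HnS]]] : exists S : seq (term C r), S_elem rd S /\ map keyt S = ks /\
    forall t, List.In t S -> forall v, D v != 0 -> t_num t v = F (keyt t) v * t_den t v.
  by apply: IH => k' H; apply: Hks; rewrite inE H orbT.
have Hk : k \in map keyt T by apply: Hks; rewrite mem_head.
have [ls [Hls [N [HN EN]]]] := key_result Hk.
exists (Term k.1 k.2 N (fun v => \prod_(l <- ls) l v) :: S); split; last split.
- move=> t [<-|Ht]; last exact: HS.
  split => //=; first exact: key_W.
  exists (size ls); exists (fun i => nth (fun _ => 1) ls i); split.
    by move=> i; apply: Hls; apply: nth_In.
  by move=> v; rewrite (big_nth (fun _ => 1)) big_mkord.
- by rewrite /= HkS /keyt /= -surjective_pairing.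
- move=> t [<-|Ht] v Hv; last exact: HnS.
  by rewrite /= EN // /keyt /= -surjective_pairing.
Qed.

Theorem main_sec :
  exists S : seq (term C r), S_elem rd S /\
    forall a b : 'rV[C]_r -> C, is_poly a -> is_poly b -> (exists v, b v != 0) ->
      forall v, defined_at T b v -> defined_at S b v ->
        applyT T a b v = applyT S a b v.
Proof.
have [S [HS [HkS HnS]]] : exists S : seq (term C r), S_elem rd S /\ map keyt S = undup (map keyt T) /\
    forall t, List.In t S -> forall v, D v != 0 -> t_num t v = F (keyt t) v * t_den t v.
  by apply: build => k; rewrite mem_undup.
exists S; split => // a b Ha Hb Hbnz v HdT HdS.
have Hv : D v != 0 by apply: den_U => t Ht; have [] := HdT t Ht.
set G := fun k : key => a (winvk k v) / b (winvk k v).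
have E1 : applyT T a b v = \sum_(t <- T) (t_num t v / t_den t v) * G (keyt t) by [].
have E2 : applyT S a b v = \sum_(t <- S) (t_num t v / t_den t v) * G (keyt t) by [].
rewrite E1 E2 regroup.
rewrite (sum_In_eq (F2 := fun t => F (keyt t) v * G (keyt t))); last first.
  move=> t Ht; have [Hd _] := HdS t Ht.
  by rewrite HnS // mulfK.
by rewrite -(big_map keyt xpredT (fun k => F k v * G k)) HkS.
Qed.

End Main.



Unset Implicit Arguments.

Theorem mainTheorem7 (C : numClosedFieldType) (r : nat)
    (rd : seq ('rV[int]_r * 'rV[int]_r)) (Hrd : is_root_datum rd)
    (T : seq (term C r)) (HT : T_elem rd T)
    (Hpres : forall P : 'rV[C]_r -> C, is_poly P ->
       exists Q : 'rV[C]_r -> C, is_poly Q /\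
         forall v, (forall t, List.In t T -> t_den t v != 0) ->
           Q v = applyT T P (fun _ => 1) v) :
  exists S : seq (term C r), S_elem rd S /\
    forall a b : 'rV[C]_r -> C, is_poly a -> is_poly b -> (exists v, b v != 0) ->
      forall v, defined_at T b v -> defined_at S b v ->
        applyT T a b v = applyT S a b v.
Proof.
exact: (main_sec Hrd HT Hpres).
Qed.
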